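(* Let $\{(\mathbf{X}^t,Y^t)\}_{t\in\mathbb{N}}$ be a discrete-time stochastic process with $\mathbf{X}^t\in\mathbb{R}^d$, and let $h^t(\mathbf{x})=\langle \boldsymbol{\beta}^t,\mathbf{x}\rangle$ be a sequence of linear classifiers approximating $P(Y^t\mid\mathbf{X}^t)$, each trained on a dataset $\mathcal{D}^t\sim P(\mathbf{X}^t,Y^t)$. Assume $-k\le \beta^t_i\le k$ and $-k\le X^t_i\le k$ for all $i,t$, for some $k\in\mathbb{R}^+$. Given a realization $\mathbf{x}^t$ and an intervention $\boldsymbol{\theta}$ with $\mathbb{E}[h^t(\hat{\mathbf{x}}^t)]\ge 1/2$, the temporal invalidation rate satisfies, for every $\tau>0$, $$\Delta h(\boldsymbol{\theta};\tau)\le k\sqrt{d}\cdot\left(\mathbb{E}\left[\|\boldsymbol{\beta}^{t+\tau}-\boldsymbol{\beta}^t\|\right]+\mathbb{E}\left[\|\hat{\mathbf{x}}^{t+\tau}-\hat{\mathbf{x}}^t\|\right]\right),$$ where $\|\cdot\|$ is the $\ell_2$-norm and the expectation is over $\mathcal{D}^t\sim P(\mathbf{X}^t,Y^t)$ and the training process.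
   Context: The intervention is a soft intervention $do(\boldsymbol{\theta})=do(\mathbf{X}_{\mathcal{I}}=\mathbf{x}_{\mathcal{I}}+\boldsymbol{\theta})$ on a subset $\mathcal{I}$ of features; $nd(\mathcal{I})$ denotes the non-descendants of the intervened variables. $\hat{\mathbf{x}}^t\sim P^{do(\boldsymbol{\theta})}(\mathbf{X}^t\mid \mathbf{X}^t_{nd(\mathcal{I})}=\mathbf{x}^t_{nd(\mathcal{I})})$ and $\hat{\mathbf{x}}^{t+\tau}\sim P^{do(\boldsymbol{\theta})}(\mathbf{X}^{t+\tau}\mid \mathbf{X}^{t+\tau}_{nd(\mathcal{I})}=\mathbf{x}^{t+\tau}_{nd(\mathcal{I})})$ (interventional distributions). The temporal invalidation rate after lag $\tau>0$ is $\Delta h(\boldsymbol{\theta};\tau)=\mathbb{E}\left[\left|h^{t+\tau}(\hat{\mathbf{x}}^{t+\tau})-h^t(\hat{\mathbf{x}}^t)\right|\right]$. *)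

(* Defs.v *)
From HB Require Import structures.
From mathcomp Require Import all_boot all_order all_algebra.
From mathcomp Require Import all_classical all_reals all_analysis.
Set Implicit Arguments. Unset Strict Implicit. Unset Printing Implicit Defensive.
Import Order.TTheory GRing.Theory Num.Theory.
Local Open Scope ring_scope.

Definition dotp {R : realType} {d : nat} (u v : 'I_d -> R) : R :=
  \sum_(i < d) u i * v i.

Definition l2norm {R : realType} {d : nat} (u : 'I_d -> R) : R :=
  Num.sqrt (\sum_(i < d) u i ^+ 2).

Definition linclf {R : realType} {d : nat} (beta : 'I_d -> R) (x : 'I_d -> R) : R :=
  dotp beta x.

(* Main.v *)
Require Import Defs.
From HB Require Import structures.
From mathcomp Require Import all_boot all_order all_algebra.
From mathcomp Require Import all_classical all_reals all_analysis.
From mathcomp Require Import ring lra.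
Import Order.TTheory GRing.Theory Num.Theory.
Local Open Scope ring_scope.

Lemma sq_sum_le (R : realType) (d : nat) (a : 'I_d -> R) :
  (\sum_(i < d) a i) ^+ 2 <= d%:R * \sum_(i < d) a i ^+ 2.
Proof.
set S := \sum_(i < d) a i; set Q := \sum_(i < d) a i ^+ 2.
have key : 0 <= \sum_(i < d) \sum_(j < d) (a i - a j) ^+ 2.
  by apply: sumr_ge0 => i _; apply: sumr_ge0 => j _; apply: sqr_ge0.
have e1 : \sum_(i < d) \sum_(j < d) (a i - a j) ^+ 2 =
   \sum_(i < d) \sum_(j < d) (a i ^+ 2 + a j ^+ 2) - 2 * \sum_(i < d) \sum_(j < d) (a i * a j).
  rewrite mulr_sumr -sumrB; apply: eq_bigr => i _.
  rewrite mulr_sumr -sumrB; apply: eq_bigr => j _; ring.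
have e2 : \sum_(i < d) \sum_(j < d) (a i ^+ 2 + a j ^+ 2) = d%:R * Q + d%:R * Q.
  under eq_bigr => i _ do rewrite big_split /= sumr_const card_ord.
  rewrite big_split /= sumrMnl -/Q sumr_const card_ord -/Q.
  by rewrite mulr_natl.
have e3 : \sum_(i < d) \sum_(j < d) (a i * a j) = S ^+ 2.
  by rewrite expr2 /S mulr_suml; apply: eq_bigr => i _; rewrite mulr_sumr.
rewrite e1 e2 e3 in key; lra.
Qed.

Lemma l1_l2 (R : realType) (d : nat) (u : 'I_d -> R) :
  \sum_(i < d) `|u i| <= Num.sqrt d%:R * l2norm u.
Proof.
rewrite /l2norm -sqrtrM ?ler0n //.
have h0 : 0 <= \sum_(i < d) `|u i| by apply: sumr_ge0 => i _.
rewrite -[X in X <= _](ger0_norm h0) -sqrtr_sqr; apply: ler_wsqrtr.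
have := @sq_sum_le R d (fun i => `|u i|).
have -> // : \sum_(i < d) `|u i| ^+ 2 = \sum_(i < d) u i ^+ 2.
by apply: eq_bigr => i _; rewrite real_normK ?num_real.
Qed.

Lemma pw (R : realType) (d : nat) (k : R) (b b' x x' : 'I_d -> R) :
  0 <= k -> (forall i, `|x' i| <= k) -> (forall i, `|b i| <= k) ->
  `|linclf b' x' - linclf b x| <=
  k * Num.sqrt d%:R * (l2norm (fun i => b' i - b i) + l2norm (fun i => x' i - x i)).
Proof.
move=> k0 hx hb.
have -> : linclf b' x' - linclf b x =
  \sum_(i < d) ((b' i - b i) * x' i + b i * (x' i - x i)).
  by rewrite /linclf /dotp -sumrB; apply: eq_bigr => i _; ring.
apply: le_trans (ler_norm_sum _ _ _) _.
apply: (@le_trans _ _ (k * (\sum_(i < d) `|b' i - b i| + \sum_(i < d) `|x' i - x i|))).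
  rewrite mulrDr !mulr_sumr -big_split /=; apply: ler_sum => i _.
  apply: le_trans (ler_normD _ _) _; rewrite !normrM mulrC; apply: lerD.
    by apply: ler_wpM2r.
  by apply: ler_wpM2r.
rewrite -mulrA; apply: ler_wpM2l => //; rewrite mulrDr.
by apply: lerD; apply: l1_l2.
Qed.

Lemma meas_lin d0 (T : measurableType d0) (R : realType) (d : nat) (b x : T -> 'I_d -> R) :
  (forall i, measurable_fun setT (fun w => b w i)) ->
  (forall i, measurable_fun setT (fun w => x w i)) ->
  measurable_fun setT (fun w => linclf (b w) (x w)).
Proof.
move=> mb mx; rewrite /linclf /dotp; apply: measurable_sum => i.
exact: measurable_realfun.measurable_funM.
Qed.

Lemma meas_l2 d0 (T : measurableType d0) (R : realType) (d : nat) (b : T -> 'I_d -> R) :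
  (forall i, measurable_fun setT (fun w => b w i)) ->
  measurable_fun setT (fun w => l2norm (b w)).
Proof.
move=> mb; rewrite /l2norm.
have ms : measurable_fun setT (@Num.sqrt R).
  exact: measurable_realfun.continuous_measurable_fun (@sqrt_continuous R).
have mS : measurable_fun setT (fun w => \sum_(i < d) b w i ^+ 2).
  apply: measurable_sum => i; exact: measurable_realfun.measurable_funX.
exact: (measurableT_comp ms mS).
Qed.

Local Open Scope ereal_scope.

Theorem theorem1 (R : realType) (dsp : measure_display) (Omega : measurableType dsp)
  (P : probability Omega R) (d : nat) (k : R)
  (beta : nat -> Omega -> 'I_d -> R)   (* beta^t, random via dataset D^t and training *)
  (xhat : nat -> Omega -> 'I_d -> R)   (* interventional samples \hat x^t *)
  (t tau : nat)
  (hk : (0 < k)%R)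
  (hbeta_meas : forall s i, measurable_fun setT (fun w => beta s w i))
  (hxhat_meas : forall s i, measurable_fun setT (fun w => xhat s w i))
  (hbeta_bd : forall s w i, (- k <= beta s w i <= k)%R)
  (hxhat_bd : forall s w i, (- k <= xhat s w i <= k)%R)
  (hvalid : \int[P]_w (linclf (beta t w) (xhat t w))%:E >= (1 / 2)%:E)
  (htau : (0 < tau)%N) :
  \int[P]_w `| linclf (beta (t + tau)%N w) (xhat (t + tau)%N w)
               - linclf (beta t w) (xhat t w) |%:E
  <= (k * Num.sqrt (d%:R))%:E *
     (\int[P]_w (l2norm (fun i => beta (t + tau)%N w i - beta t w i))%:E
      + \int[P]_w (l2norm (fun i => xhat (t + tau)%N w i - xhat t w i))%:E).
Proof.
set u := (t + tau)%N.
have k0 : (0 <= k)%R by apply: ltW.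
have c0 : (0 <= k * Num.sqrt d%:R)%R by apply: mulr_ge0.
have mnb : measurable_fun setT (fun w => l2norm (fun i => beta u w i - beta t w i)%R).
  by apply: (@meas_l2 _ _ _ _ (fun w i => beta u w i - beta t w i)%R) => i; apply: measurable_realfun.measurable_funB.
have mnx : measurable_fun setT (fun w => l2norm (fun i => xhat u w i - xhat t w i)%R).
  by apply: (@meas_l2 _ _ _ _ (fun w i => xhat u w i - xhat t w i)%R) => i; apply: measurable_realfun.measurable_funB.
rewrite -ge0_integralD //; last first.
  all: try (by move=> w _; rewrite lee_fin sqrtr_ge0).
  all: try (by apply/measurable_realfun.measurable_EFinP).
rewrite -ge0_integralZl_EFin //; last first.
  all: try (by move=> w _; rewrite adde_ge0 // lee_fin sqrtr_ge0).
  all: try (by apply: emeasurable_funD; apply/measurable_realfun.measurable_EFinP).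
apply: ge0_le_integral => //.
- apply/measurable_realfun.measurable_EFinP; apply: measurableT_comp; first exact: measurable_realfun.normr_measurable.
  by apply: measurable_realfun.measurable_funB; apply: meas_lin.
- apply: measurable_funeM; apply: emeasurable_funD; apply/measurable_realfun.measurable_EFinP => //.
- move=> w _; rewrite -EFinD -EFinM lee_fin.
  apply: pw => // i; rewrite ler_norml; [exact: hxhat_bd|exact: hbeta_bd].
Qed.
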